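(* Let $I$ be a countable set and let $C\subseteq[0,1]^I$ be a connected (in the product topology) chain from $0$ to $1$. Then there are continuous, surjective, nondecreasing functions $f_i:[0,1]\to[0,1]$, $i\in I$, such that $\{(f_i(t))_{i\in I}:t\in[0,1]\}=C$.
   Context: $[0,1]^I$ carries the coordinatewise (product) partial order. A chain from $0$ to $1$ in $[0,1]^I$ is a subset $C$ that is linearly ordered by this order and contains the constant tuples with values $0$ and $1$. *)

(* Defs.v *)
From HB Require Import structures.
From mathcomp Require Import all_boot all_order all_algebra.
From mathcomp Require Import all_classical all_reals all_analysis.
Set Implicit Arguments. Unset Strict Implicit. Unset Printing Implicit Defensive.
Import Order.TTheory GRing.Theory Num.Theory.
Local Open Scope classical_set_scope.
Local Open Scope ring_scope.

Definition ple (R : realType) (I : Type) (x y : I -> R) : Prop :=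
  forall i, x i <= y i.

Definition chain01 (R : realType) (I : Type) (C : set (I -> R)) : Prop :=
  [/\ (forall x, C x -> forall i, 0 <= x i <= 1),
      (forall x y, C x -> C y -> ple x y \/ ple y x),
      C (fun _ => 0) & C (fun _ => 1)].

(* Main.v *)
Require Import Defs.
From HB Require Import structures.
From mathcomp Require Import all_boot all_order all_algebra.
From mathcomp Require Import all_classical all_reals all_analysis.
From mathcomp Require Import ring lra.
Import Order.TTheory GRing.Theory Num.Theory.
Import numFieldTopology.Exports.
Local Open Scope classical_set_scope.
Local Open Scope ring_scope.

Set Implicit Arguments. Unset Strict Implicit.

Section Series.
Variables (R : realType) (I : Type) (e : nat -> I).

Definition ww (n : nat) : R := (2^-1) ^+ n.+1.
Definition SS (x : I -> R) (N : nat) : R := \sum_(n < N) ww n * x (e n).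
Definition phi (x : I -> R) : R := limn (SS x).
Definition B01 (x : I -> R) := forall i, 0 <= x i <= 1.

Lemma ww_ge0 n : 0 <= ww n.
Proof. by rewrite /ww exprn_ge0 // invr_ge0. Qed.

Lemma ww_eq n : ww n = (2^-1) ^+ n - (2^-1) ^+ n.+1.
Proof. by rewrite /ww exprS; field. Qed.

Lemma SS_S x N : SS x N.+1 = SS x N + ww N * x (e N).
Proof. by rewrite /SS big_ord_recr. Qed.

Lemma SS0 x : SS x 0 = 0.
Proof. by rewrite /SS big_ord0. Qed.

Lemma SS_nd x : B01 x -> {homo SS x : n m / (n <= m)%N >-> n <= m}.
Proof.
move=> Bx n m /subnK <-; elim: (m - n)%N => [|k IH]; first by rewrite add0n.
rewrite addSn SS_S (le_trans IH) // lerDl mulr_ge0 ?ww_ge0 //.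
by case/andP: (Bx (e (k + n)%N)).
Qed.

Lemma SS_tail x N k : B01 x -> SS x (k + N) <= SS x N + (2^-1) ^+ N - (2^-1) ^+ (k + N).
Proof.
move=> Bx; elim: k => [|k IH]; first by rewrite add0n addrK.
rewrite addSn SS_S.
have h : ww (k + N) * x (e (k + N)) <= ww (k + N).
  by rewrite ler_piMr ?ww_ge0 //; case/andP: (Bx (e (k + N)%N)).
move: IH h; rewrite ww_eq; lra.
Qed.

Lemma SS_cvg x : B01 x -> cvgn (SS x).
Proof.
move=> Bx; apply: nondecreasing_is_cvgn; first exact: SS_nd.
exists 1 => _ [k _ <-]; have := SS_tail 0 k Bx; rewrite addn0 SS0 expr0.
have : 0 <= (2^-1 : R) ^+ k by rewrite exprn_ge0 // invr_ge0.
lra.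
Qed.

Lemma phi_lb x N : B01 x -> SS x N <= phi x.
Proof. move=> Bx; apply: nondecreasing_cvgn_le; [exact: SS_nd | exact: SS_cvg]. Qed.

Lemma phi_ub x N : B01 x -> phi x <= SS x N + (2^-1) ^+ N.
Proof.
move=> Bx; apply: limr_le; first exact: SS_cvg.
exists N => // M /= NM; rewrite -(subnK NM).
have := SS_tail N (M - N) Bx.
have : 0 <= (2^-1 : R) ^+ (M - N + N) by rewrite exprn_ge0 // invr_ge0.
lra.
Qed.

Lemma phi_le x y : B01 x -> B01 y -> (forall i, x i <= y i) -> phi x <= phi y.
Proof.
move=> Bx By xy; apply: ler_lim; [exact: SS_cvg | exact: SS_cvg |].
apply: nearW => N; rewrite /SS; apply: ler_sum => n _.
by rewrite ler_wpM2l ?ww_ge0.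
Qed.

Lemma phi_lt x y n : B01 x -> B01 y -> (forall i, x i <= y i) ->
  x (e n) < y (e n) -> phi x < phi y.
Proof.
move=> Bx By xy xyn; rewrite -subr_gt0 /phi -limB; [|exact: SS_cvg|exact: SS_cvg].
apply: (@lt_le_trans _ _ (ww n * (y (e n) - x (e n)))).
  by rewrite mulr_gt0 ?subr_gt0 // /ww exprn_gt0 // invr_gt0.
apply: limr_ge; first by apply: is_cvgB; exact: SS_cvg.
exists n.+1 => // M /= nM.
change (ww n * (y (e n) - x (e n)) <= SS y M - SS x M).
rewrite /SS -sumrB (bigD1 (Ordinal nM)) //= -mulrBr lerDl; apply: sumr_ge0 => k _.
by rewrite -mulrBr mulr_ge0 ?ww_ge0 ?subr_ge0.
Qed.

End Series.

Section Cont.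
Variables (R : realType) (I : countType) (e : nat -> I).

Lemma SS1_le N : SS e (fun _ => (1:R)) N <= 1.
Proof.
have B : B01 (fun _ : I => (1:R)) by move=> i; rewrite ler01 lexx.
have := SS_tail e 0 N B; rewrite SS0 addn0 expr0.
have : 0 <= (2^-1 : R) ^+ N by rewrite exprn_ge0 // invr_ge0.
lra.
Qed.

Lemma coord_near (x : {ptws I -> R}) (eps : R) : 0 < eps -> forall M,
  nbhs x [set g : {ptws I -> R} | forall n, (n < M)%N -> `|x (e n) - g (e n)| < eps].
Proof.
move=> eps0; have FF := nbhs_filter x.
elim => [|M IH]; first by apply: (@filterE _ _ FF) => g n; rewrite ltn0.
have HM := @proj_continuous I (fun _ => R) (e M) x (ball (x (e M)) eps)
   (nbhsx_ballx _ _ eps0).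
apply: (@filterS _ _ FF _ _ _ (@filterI _ _ FF _ _ HM IH)).
move=> g [h1 h2] n; rewrite ltnS leq_eqVlt => /orP[/eqP->|nM]; last exact: h2.
by move: h1; rewrite /= -ball_normE.
Qed.

Lemma phi_cont (C : set {ptws I -> R}) : (forall x, C x -> B01 x) ->
  {within C, continuous (phi e : {ptws I -> R} -> R)}.
Proof.
move=> CB; rewrite continuous_subspace_in => x /set_mem Cx.
rewrite /continuous_at; change (phi e @ (nbhs_subspace (x : subspace C)) --> phi e x).
rewrite -nbhs_subspace_in //.
have FF := nbhs_filter (x : {ptws I -> R}).
apply/(@cvgrPdist_lt _ _ _ _ (within_filter C FF)) => eps eps0.
have eps3 : 0 < eps / 3 by rewrite divr_gt0.
have := @cvg_expr R (2^-1); rewrite ger0_norm ?invr_ge0 // invf_lt1 // ltr1n.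
move=> /(_ isT) /cvgrPdist_lt /(_ _ eps3) [N _ HN].
have hN := HN N (leqnn N); rewrite sub0r normrN ger0_norm /= in hN; last first.
  by rewrite exprn_ge0 // invr_ge0.
have Hc := coord_near x eps3.
suff H : nbhs (x : {ptws I -> R}) (fun g => C g -> `|phi e x - phi e g| < eps) by exact: H.
apply: (@filterS _ _ FF _ _ _ (Hc N)) => g Hg Cg.
have Bx := CB _ Cx; have Bg := CB _ Cg.
have d : `|SS e x N - SS e g N| <= eps / 3.
  rewrite /SS -sumrB; apply: le_trans (ler_norm_sum _ _ _) _.
  apply: (@le_trans _ _ (\sum_(n < N) ww R n * (eps / 3))).
    apply: ler_sum => n _; rewrite -mulrBr normrM ger0_norm ?ww_ge0 //.
    by rewrite ler_wpM2l ?ww_ge0 // ltW // Hg.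
  rewrite -mulr_suml; have := SS1_le N; rewrite /SS.
  under eq_bigr do rewrite mulr1.
  by move=> h; rewrite ler_piMl // ltW.
move: d; rewrite ler_norml => /andP[d1 d2].
have := phi_lb e N Bx; have := phi_ub e N Bx; have := phi_lb e N Bg; have := phi_ub e N Bg.
rewrite ltr_norml; move: hN d1 d2; lra.
Qed.

End Cont.

Section Mono.
Variable R : realType.

Lemma itv01P (x : R) : `[0, 1]%classic x <-> 0 <= x <= 1.
Proof. by rewrite /= in_itv /=. Qed.

Lemma mono_cont (f : R -> R) : {in `[0, 1] &, {homo f : s t / s <= t}} ->
  f @` `[0, 1]%classic = `[0, 1]%classic -> {within `[0, 1]%classic, continuous f}.
Proof.
move=> fh fimg; rewrite continuous_subspace_in => t /set_mem t01.
rewrite /continuous_at.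
change (f @ nbhs_subspace (t : subspace `[0, 1]%classic) --> f t).
rewrite -nbhs_subspace_in //.
apply/cvgrPdist_lt => eps eps0.
have fin s : `[0, 1]%classic s -> 0 <= f s <= 1.
  move=> s01; have : `[0, 1]%classic (f s) by rewrite -fimg; exists s.
  by move/itv01P.
have homo s u : `[0, 1]%classic s -> `[0, 1]%classic u -> s <= u -> f s <= f u.
  by move=> s01 u01; apply: fh; rewrite inE.
have /andP[v0 v1] := fin t t01.
have [d1 d1p H1] : exists2 d1 : R, 0 < d1 &
    forall s, `[0, 1]%classic s -> s < t + d1 -> f s < f t + eps.
  case: (ltP (f t) 1) => [vlt1|vge1]; last first.
    exists 1 => // s s01 _; have /andP[_ ?] := fin s s01; lra.
  set u := Num.min (f t + eps / 2) 1.
  have u01 : `[0, 1]%classic u.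
    apply/itv01P; rewrite /u le_min ge_min lexx orbT andbT ler01 andbT.
    lra.
  have ugt : f t < u by rewrite /u lt_min vlt1 andbT; lra.
  have ule : u <= f t + eps / 2 by rewrite /u ge_min lexx.
  have [tp tp01 ftp] : (f @` `[0, 1]%classic) u by rewrite fimg.
  have ttp : t < tp.
    rewrite ltNge; apply/negP => tpt; have := homo _ _ tp01 t01 tpt; lra.
  exists (tp - t); first by rewrite subr_gt0.
  move=> s s01 stp; have := homo _ _ s01 tp01 (ltW (_ : s < tp)).
  by move=> h; lra.
have [d2 d2p H2] : exists2 d2 : R, 0 < d2 &
    forall s, `[0, 1]%classic s -> t - d2 < s -> f t - eps < f s.
  case: (ltP 0 (f t)) => [vgt0|vle0]; last first.
    exists 1 => // s s01 _; have /andP[? _] := fin s s01; lra.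
  set u := Num.max (f t - eps / 2) 0.
  have u01 : `[0, 1]%classic u.
    apply/itv01P; rewrite /u le_max lexx orbT /= ge_max ler01 andbT.
    lra.
  have ult : u < f t by rewrite /u gt_max vgt0 andbT; lra.
  have uge : f t - eps / 2 <= u by rewrite /u le_max lexx.
  have [tm tm01 ftm] : (f @` `[0, 1]%classic) u by rewrite fimg.
  have ttm : tm < t.
    rewrite ltNge; apply/negP => ttm; have := homo _ _ t01 tm01 ttm; lra.
  exists (t - tm); first by rewrite subr_gt0.
  move=> s s01 stm; have := homo _ _ tm01 s01 (ltW (_ : tm < s)).
  by move=> h; lra.
change (nbhs t (fun s => `[0, 1]%classic s -> `|f t - f s| < eps)).
apply/nbhs_ballP; exists (Num.min d1 d2) => /=; first by rewrite lt_min d1p d2p.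
move=> s; rewrite -ball_normE /= lt_min => /andP[sd1 sd2] s01.
move: sd1 sd2; rewrite !ltr_norml => /andP[a1 a2] /andP[b1 b2].
have := H1 s s01 ltac:(lra); have := H2 s s01 ltac:(lra).
lra.
Qed.
End Mono.

Unset Implicit Arguments. Set Strict Implicit.

Theorem mainTheorem16 (R : realType) (I : countType) (C : set (I -> R)) :
  chain01 C ->
  @connected {ptws I -> R} C ->
  exists f : I -> R -> R,
    (forall i, {within `[0, 1]%classic, continuous (f i)}) /\
    (forall i, f i @` `[0, 1]%classic = `[0, 1]%classic) /\
    (forall i, {in `[0, 1] &, {homo f i : s t / s <= t}}) /\
    [set (fun i => f i t) | t in `[0, 1]%classic] = C.
Proof.
move=> [CB chain C0 C1] Cconn.
have CB' : forall x : {ptws I -> R}, C x -> B01 x by [].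
have i01 : `[0, 1]%classic (0 : R) by apply/itv01P; rewrite lexx ler01.
have i11 : `[0, 1]%classic (1 : R) by apply/itv01P; rewrite lexx ler01.
case: (pselect (exists i : I, True)) => [[i0 _]|noI]; last first.
  exists (fun _ t => t); split; first by move=> i; case: noI; exists i.
  split; first by move=> i; case: noI; exists i.
  split; first by move=> i; case: noI; exists i.
  rewrite eqEsubset; split => [y [t _ <-]|y Cy].
    have -> : (fun i : I => t) = (fun _ => 0).
      by apply: funext => i; case: noI; exists i.
    exact: C0.
  by exists 0 => //; apply: funext => i; case: noI; exists i.
pose e n := odflt i0 (unpickle n).
have eK i : e (pickle i) = i by rewrite /e pickleK.
pose a := phi e (fun _ => 0 : R); pose b := phi e (fun _ => 1 : R).
have philt x y : C x -> C y -> ple x y -> x <> y -> phi e x < phi e y.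
  move=> Cx Cy xy nxy.
  case: (pselect (exists i, x i < y i)) => [[i lt]|nex].
    by apply: (@phi_lt _ _ _ _ _ (pickle i)) => //; [exact: CB|exact: CB|rewrite eK].
  case: nxy; apply: funext => i; apply/eqP; rewrite eq_le xy /= leNgt.
  by apply/negP => h; apply: nex; exists i.
have phile x y : C x -> C y -> ple x y -> phi e x <= phi e y.
  by move=> Cx Cy; apply: phi_le; exact: CB.
have inj x y : C x -> C y -> phi e x = phi e y -> x = y.
  move=> Cx Cy pxy; apply: contrapT => nxy.
  case: (chain _ _ Cx Cy) => h.
    by have := philt _ _ Cx Cy h nxy; rewrite pxy ltxx.
  by have := philt _ _ Cy Cx h (fun h' => nxy (esym h')); rewrite pxy ltxx.
have ab : a < b.
  apply: philt => //.
  move=> h; have := congr1 (fun f => f i0) h => /= /eqP; rewrite eq_sym oner_eq0.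
  by [].
have img r : a <= r <= b -> exists2 x, C x & phi e x = r.
  have conn := connected_continuous_connected Cconn (phi_cont (e:=e) CB').
  move/connected_intervalP: conn => conn rab.
  exact: (conn a b (ex_intro2 _ _ _ C0 erefl) (ex_intro2 _ _ _ C1 erefl) r rab).
pose g (t : R) := xget ((fun _ => 0) : {ptws I -> R})
  [set x : {ptws I -> R} | C x /\ phi e x = a + t * (b - a)].
have gP t : 0 <= t <= 1 -> C (g t) /\ phi e (g t) = a + t * (b - a).
  move=> /andP[t0 t1].
  have h1 : 0 <= t * (b - a) by rewrite mulr_ge0 // subr_ge0 ltW.
  have h2 : t * (b - a) <= b - a by rewrite ler_piMl // subr_ge0 ltW.
  have [x Cx px] := img (a + t * (b - a)) ltac:(apply/andP; split; lra).
  exact: (xgetPex ((fun _ => 0) : {ptws I -> R})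
    (P := [set x : {ptws I -> R} | C x /\ phi e x = a + t * (b - a)])
    (ex_intro _ x (conj Cx px))).
have gonto x : C x -> exists2 t, `[0, 1]%classic t & g t = x.
  move=> Cx; have ba : b - a != 0 by rewrite subr_eq0 gt_eqF.
  have ax : a <= phi e x by apply: phile => // i; have /andP[] := CB x Cx i.
  have xb : phi e x <= b by apply: phile => // i; have /andP[] := CB x Cx i.
  have t01 : 0 <= (phi e x - a) / (b - a) <= 1.
    apply/andP; split; first by rewrite divr_ge0 // subr_ge0 // ltW.
    by rewrite ler_pdivrMr ?subr_gt0 // mul1r; lra.
  exists ((phi e x - a) / (b - a)); first exact/itv01P.
  have [Cg pg] := gP _ t01; apply: inj => //; rewrite pg.
  by rewrite mulrVK ?unitfE // addrC subrK.
have ghomo s t : 0 <= s <= 1 -> 0 <= t <= 1 -> s <= t -> ple (g s) (g t).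
  move=> s01 t01 st; have [Cs ps] := gP s s01; have [Ct pt] := gP t t01.
  case: (chain _ _ Cs Ct) => // h.
  case: (pselect (g t = g s)) => [->|ne]; first by move=> i; exact: lexx.
  have := philt _ _ Ct Cs h ne; rewrite ps pt.
  have : s * (b - a) <= t * (b - a) by rewrite ler_wpM2r // subr_ge0 ltW.
  lra.
have gsurj i : (fun t => g t i) @` `[0, 1]%classic = `[0, 1]%classic.
  rewrite eqEsubset; split => [_ [t t01 <-]|v v01].
    by have [Ct _] := gP t (iffLR (itv01P t) t01); apply/itv01P; exact: CB.
  have pc : {within (C : set {ptws I -> R}), continuous (fun x : {ptws I -> R} => x i)}.
    apply: (@continuous_subspaceT {ptws I -> R} R C (fun x : {ptws I -> R} => x i)).
    move=> x; exact: (@proj_continuous I (fun _ => R) i x).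
  have conn := connected_continuous_connected Cconn pc.
  move/connected_intervalP: conn => conn.
  have [x Cx xv] := conn 0 1 (ex_intro2 _ _ _ C0 erefl) (ex_intro2 _ _ _ C1 erefl)
     v (iffLR (itv01P v) v01).
  have [t t01 gt] := gonto x Cx.
  by exists t => //; rewrite gt.
have ghomo' i : {in `[0, 1] &, {homo (fun t => g t i) : s t / s <= t}}.
  move=> s t; rewrite !in_itv /= => s01 t01 st; exact: ghomo.
exists (fun i t => g t i); split; first by move=> i; apply: mono_cont.
split; first exact: gsurj.
split; first exact: ghomo'.
rewrite eqEsubset; split => [_ [t t01 <-]|x Cx].
  by have [] := gP t (iffLR (itv01P t) t01).
have [t t01 gt] := gonto x Cx.
by exists t.
Qed.
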